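(* Let $\mathfrak{g}=\prod_{i=1}^k\mathfrak{q}_i$ be a semisimple complex Lie algebra with each $\mathfrak{q}_i$ simple of type $A_{n_i}$. Let $r$ denote the rank of $\mathfrak{g}$ and let $V$ be a faithful representation of $\mathfrak{g}$. Let $\langle-,-\rangle$ be any $W_{\mathfrak{g}}$-invariant inner product on $\Lambda_{\mathfrak{g}}\otimes\mathbb{R}$, and let $W_{\max}$ denote the set of weights of $V$ of maximal norm. If $W_{\max}$ spans $\Lambda_{\mathfrak{g}}\otimes\mathbb{R}$, then $\#W_{\max}\geq r+1$, with equality holding possibly only if $k=1$.
   Context: $\Lambda_{\mathfrak{g}}$ is the weight lattice of $\mathfrak{g}$ (with respect to a fixed Cartan subalgebra) and $W_{\mathfrak{g}}$ its Weyl group; weights of $V$ are the characters of the Cartan subalgebra occurring in $V$. *)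

(* Defs.v *)
From HB Require Import structures.
From mathcomp Require Import all_boot all_order all_algebra.
From mathcomp Require Import perm.
From mathcomp Require Import complex.
From mathcomp Require Import reals.
Set Implicit Arguments. Unset Strict Implicit. Unset Printing Implicit Defensive.
Import Order.TTheory GRing.Theory Num.Theory.
Local Open Scope ring_scope.

(* g = prod_{b < k} sl_{m_b}(C), m_b >= 2 (type A_{m_b - 1}), realized as the
   Lie algebra of block-diagonal N x N complex matrices, the blocks being the
   fibres of a labelling c : 'I_N -> 'I_k, each block having trace zero. *)

Definition valid_blocks (N k : nat) (c : 'I_N -> 'I_k) : Prop :=
  forall b : 'I_k, (2 <= #|[pred i | c i == b]|)%N.

Definition blocksum0 (T : nmodType) (N k : nat) (c : 'I_N -> 'I_k)
  (x : 'rV[T]_N) : bool :=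
  [forall b : 'I_k, \sum_(i | c i == b) x 0 i == 0].

Definition in_g (R : realType) (N k : nat) (c : 'I_N -> 'I_k)
  (X : 'M[R[i]]_N) : bool :=
  [forall i, forall j, (c i != c j) ==> (X i j == 0)] &&
  blocksum0 c (\row_i X i i).

Definition lie_bracket (F : pzRingType) (n : nat) (X Y : 'M[F]_n) : 'M[F]_n :=
  X *m Y - Y *m X.

Definition is_rep (R : realType) (N k d : nat) (c : 'I_N -> 'I_k)
  (rho : 'M[R[i]]_N -> 'M[R[i]]_d) : Prop :=
  (forall (a : R[i]) X Y, in_g c X -> in_g c Y ->
      rho (a *: X + Y) = a *: rho X + rho Y) /\
  (forall X Y, in_g c X -> in_g c Y ->
      rho (lie_bracket X Y) = lie_bracket (rho X) (rho Y)).

Definition faithful (R : realType) (N k d : nat) (c : 'I_N -> 'I_k)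
  (rho : 'M[R[i]]_N -> 'M[R[i]]_d) : Prop :=
  forall X, in_g c X -> rho X = 0 -> X = 0.

(* Cartan subalgebra h = diagonal matrices diag_mx t of g (blocksum0 t).
   h^* is identified with {a in C^N | blocksum0 a} via
   a(diag_mx t) = \sum_j a_j t_j; Lambda_g (x) R is then the real subspace
   E = {x in R^N | blocksum0 x}.  A vector x in E is a weight of V if the
   corresponding character occurs in V (all weights of a finite-dimensional
   representation are real, so nothing is lost by taking x real). *)
Definition is_weight (R : realType) (N k d : nat) (c : 'I_N -> 'I_k)
  (rho : 'M[R[i]]_N -> 'M[R[i]]_d) (x : 'rV[R]_N) : Prop :=
  blocksum0 c x /\
  exists v : 'cV[R[i]]_d, v != 0 /\
    forall t : 'rV[R[i]]_N, blocksum0 c t ->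
      rho (diag_mx t) *m v = (\sum_j Complex (x 0 j) 0 * t 0 j) *: v.

Definition bform (R : realType) (N : nat) (B : 'M[R]_N) (x y : 'rV[R]_N) : R :=
  (x *m B *m y^T) 0 0.

Definition inner_product_on_E (R : realType) (N k : nat) (c : 'I_N -> 'I_k)
  (B : 'M[R]_N) : Prop :=
  (forall x y, blocksum0 c x -> blocksum0 c y -> bform B x y = bform B y x) /\
  (forall x, blocksum0 c x -> x != 0 -> 0 < bform B x x).

(* W_g = prod_b S_{m_b}, acting on E by permuting coordinates inside blocks *)
Definition weyl_invariant (R : realType) (N k : nat) (c : 'I_N -> 'I_k)
  (B : 'M[R]_N) : Prop :=
  forall s : 'S_N, (forall i, c (s i) = c i) ->
  forall x y, blocksum0 c x -> blocksum0 c y ->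
    bform B (col_perm s x) (col_perm s y) = bform B x y.

Definition max_weight (R : realType) (N k d : nat) (c : 'I_N -> 'I_k)
  (rho : 'M[R[i]]_N -> 'M[R[i]]_d) (B : 'M[R]_N) (x : 'rV[R]_N) : Prop :=
  is_weight c rho x /\
  (forall y, is_weight c rho y -> bform B y y <= bform B x x).

Definition spans_E (R : realType) (N k : nat) (c : 'I_N -> 'I_k)
  (s : seq 'rV[R]_N) : Prop :=
  forall x, blocksum0 c x ->
    exists coef : 'I_(size s) -> R, x = \sum_(j < size s) coef j *: s`_j.

(* Main.v *)
Require Import Defs.
From HB Require Import structures.
From mathcomp Require Import all_boot all_order all_algebra.
From mathcomp Require Import perm.
From mathcomp Require Import complex.
From mathcomp Require Import reals.
From Stdlib Require Import Classical.
From mathcomp Require Import ring zify.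
Import Order.TTheory GRing.Theory Num.Theory.
Local Open Scope ring_scope.
Set Implicit Arguments. Unset Strict Implicit. Unset Printing Implicit Defensive.

Lemma fin_eig (F : numFieldType) d (h : 'M[F]_d) (mu : nat -> F) :
  injective mu -> ~ (forall m, exists w : 'cV_d, w != 0 /\ h *m w = mu m *: w).
Proof.
move=> inj H; set P := char_poly h^T.
have P0 : P != 0 := monic_neq0 (char_poly_monic _).
suff : (size P < size P)%N by rewrite ltnn.
rewrite -{1}(size_iota 0 (size P)) -(size_map mu); apply: max_poly_roots P0 _ _.
- apply/allP => _ /mapP [m _ ->]; rewrite -eigenvalue_root_char.
  have [w [w0 hw]] := H m; apply/eigenvalueP; exists w^T.
    by rewrite -trmx_mul hw linearZ.
  by rewrite trmx_eq0.
- by rewrite map_inj_uniq ?iota_uniq.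
Qed.

Lemma exists_first_zero (P : nat -> bool) : P 0 -> ~ (forall m, P m) ->
  exists m, (forall p, (p <= m)%N -> P p) /\ ~~ P m.+1.
Proof.
move=> P0 H; apply: NNPP => H'; apply: H => m.
suff: forall p, (p <= m)%N -> P p by apply.
elim: m => [|m IH] p; first by rewrite leqn0 => /eqP ->.
rewrite leq_eqVlt => /orP [/eqP ->|]; last by apply: IH.
apply: contraT => Hm; case: H'; by exists m; split.
Qed.

Definition ev (F : pzRingType) N (lam t : 'rV[F]_N) := \sum_j lam 0 j * t 0 j.

Lemma evDZ (F : comPzRingType) N (lam al t : 'rV[F]_N) (a : F) :
  ev (lam + a *: al) t = ev lam t + a * ev al t.
Proof.
rewrite /ev mulr_sumr -big_split /=; apply: eq_bigr => j _.
by rewrite !mxE mulrDl mulrA.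
Qed.

Definition Wt (F : pzRingType) N d (bs : pred 'rV[F]_N) (D : 'rV[F]_N -> 'M[F]_d)
  (lam : 'rV[F]_N) (v : 'cV[F]_d) :=
  forall t, bs t -> D t *m v = ev lam t *: v.

Lemma sl2_main (F : numFieldType) N d (bs : pred 'rV[F]_N) (D : 'rV[F]_N -> 'M[F]_d)
  (e f : 'M[F]_d) (al h0 lam : 'rV[F]_N) (v : 'cV[F]_d) :
  (forall t, bs t -> D t *m e = e *m D t + ev al t *: e) ->
  (forall t, bs t -> D t *m f = f *m D t - ev al t *: f) ->
  e *m f - f *m e = D h0 -> bs h0 -> ev al h0 = 2 ->
  Wt bs D lam v -> v != 0 ->
  exists m q : nat, ev lam h0 + (2 * m)%:R = q%:R /\
    forall p, (p <= q)%N -> exists w, w != 0 /\ Wt bs D (lam + (m%:R - p%:R) *: al) w.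
Proof.
move=> He Hf Hef bh0 ah0 Wv v0.
have raise a w : Wt bs D (lam + a *: al) w -> Wt bs D (lam + (a + 1) *: al) (e *m w).
  move=> Hw t bt; rewrite mulmxA He // mulmxDl -mulmxA Hw // -scalemxAr -scalemxAl -scalerDl.
  idtac.
  by rewrite !evDZ mulrDl mul1r addrA.
have lower a w : Wt bs D (lam + a *: al) w -> Wt bs D (lam + (a - 1) *: al) (f *m w).
  move=> Hw t bt; rewrite mulmxA Hf // mulmxBl -mulmxA Hw // -scalemxAr -scalemxAl -scalerBl.
  by rewrite !evDZ mulrBl mul1r addrA.
have heig a w : Wt bs D (lam + a *: al) w -> D h0 *m w = (ev lam h0 + a *+ 2) *: w.
  by move=> Hw; rewrite Hw // evDZ ah0 mulr_natr.
have Wv0 : Wt bs D (lam + 0 *: al) v by rewrite scale0r addr0.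
have Wit m : Wt bs D (lam + m%:R *: al) (iter m (mulmx e) v).
  elim: m => [|m IH] //=; by rewrite -[m.+1]addn1 natrD; apply: raise.
have [m [/(_ m (leqnn m)) Hm1 Hm2]] : exists m, (forall p, (p <= m)%N -> iter p (mulmx e) v != 0) /\ ~~ (iter m.+1 (mulmx e) v != 0).
  apply: exists_first_zero => // Hall.
  apply: (@fin_eig _ _ (D h0) (fun m => ev lam h0 + (2 * m)%:R)).
    by move=> x y /addrI /eqP; rewrite eqr_nat eqn_mul2l /= => /eqP.
  move=> m; exists (iter m (mulmx e) v); split; first by apply: Hall.
  by rewrite natrM mulr_natl; apply: heig; apply: Wit.
set u := iter m (mulmx e) v.
have eu : e *m u = 0 by move: Hm2; rewrite negbK => /eqP.
have Wu := Wit m.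
set mu := ev lam h0 + (2 * m)%:R.
have Wf p : Wt bs D (lam + (m%:R - p%:R) *: al) (iter p (mulmx f) u).
  elim: p => [|p IH] /=; first by rewrite subr0.
  by rewrite -[p.+1]addn1 natrD opprD addrA; apply: lower.
have hf p : D h0 *m iter p (mulmx f) u = (mu - (2 * p)%:R) *: iter p (mulmx f) u.
  rewrite (heig _ _ (Wf p)) /mu; congr (_ *: _).
  by rewrite !natrM !mulr_natl mulrnBl addrA.
have ef : e *m f = f *m e + D h0 by rewrite -Hef addrC subrK.
have form p : e *m iter p.+1 (mulmx f) u =
    ((p.+1)%:R * (mu - p%:R)) *: iter p (mulmx f) u.
  elim: p => [|p IH].
    have hu : D h0 *m u = mu *: u by have := hf 0%N; rewrite muln0 subr0.
    by rewrite /= mulmxA ef mulmxDl -mulmxA eu mulmx0 add0r hu mul1r !subr0.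
  rewrite [iter p.+2 _ _]/= mulmxA ef mulmxDl -mulmxA IH (hf p.+1) -scalemxAr -scalerDl.
  congr (_ *: _); rewrite !natrM -[p.+2]addn1 -[p.+1]addn1 !natrD.
  by ring.
have [q0 [Hq1 Hq2]] : exists q, (forall p, (p <= q)%N -> iter p (mulmx f) u != 0) /\ ~~ (iter q.+1 (mulmx f) u != 0).
  apply: exists_first_zero => // Hall.
  apply: (@fin_eig _ _ (D h0) (fun p => mu - (2 * p)%:R)).
    by move=> x y /addrI /oppr_inj /eqP; rewrite eqr_nat eqn_mul2l /= => /eqP.
  by move=> p; exists (iter p (mulmx f) u); split; [apply: Hall | apply: hf].
have [Hq3 Hq4] : iter q0 (mulmx f) u != 0 /\ e *m iter q0.+1 (mulmx f) u = 0.
  by split; [apply: Hq1 | move: Hq2; rewrite negbK => /eqP ->; rewrite mulmx0].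
have muq : mu = q0%:R.
  move: Hq4; rewrite form => /eqP; rewrite scaler_eq0 (negPf Hq3) orbF mulf_eq0.
  by rewrite pnatr_eq0 /= subr_eq0 => /eqP.
exists m, q0; split; first by rewrite -muq.
by move=> p pq; exists (iter p (mulmx f) u); split; [apply: Hq1 | apply: Wf].
Qed.

Local Open Scope complex_scope.
Local Open Scope ring_scope.

Lemma ev_delta (F : comPzRingType) N (i : 'I_N) (t : 'rV[F]_N) :
  ev (delta_mx 0 i) t = t 0 i.
Proof.
rewrite /ev (bigD1 i) //= big1 => [|l /negbTE li]; rewrite !mxE ?eqxx ?mul1r ?addr0 //.
by rewrite li mul0r.
Qed.

Lemma evC (F : comPzRingType) N (a b : 'rV[F]_N) : ev a b = ev b a.
Proof. by apply: eq_bigr => l _; rewrite mulrC. Qed.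

Lemma evB (F : comPzRingType) N (a b t : 'rV[F]_N) : ev (a - b) t = ev a t - ev b t.
Proof. by rewrite /ev -sumrB; apply: eq_bigr => l _; rewrite !mxE mulrBl. Qed.

Lemma blocksum0_delta (T : pzRingType) N k (c : 'I_N -> 'I_k) (i j : 'I_N) :
  c i = c j -> blocksum0 c (delta_mx 0 i - delta_mx 0 j : 'rV[T]_N).
Proof.
move=> cij; apply/forallP => b; apply/eqP.
have H l : \sum_(m | c m == b) (delta_mx 0 l : 'rV[T]_N) 0 m = (c l == b)%:R.
  rewrite (big_mkcond (fun m => c m == b)) (bigD1 l) //= big1 => [|m /negbTE ml].
    by rewrite !mxE !eqxx addr0; case: (c l == b).
  by rewrite !mxE eq_sym ml /= if_same.
rewrite (eq_bigr (fun m => (delta_mx 0 i : 'rV[T]_N) 0 m - (delta_mx 0 j : 'rV[T]_N) 0 m)).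
  by rewrite sumrB !H cij subrr.
by move=> m _; rewrite !mxE.
Qed.

Lemma in_g_diag (R : realType) N k (c : 'I_N -> 'I_k) (t : 'rV[R[i]]_N) :
  blocksum0 c t -> in_g c (diag_mx t).
Proof.
move=> bt; apply/andP; split.
  apply/forallP => a; apply/forallP => b; apply/implyP => cab.
  rewrite mxE; case: (eqVneq a b) => [ab|nab]; last by rewrite mulr0n.
  by move: cab; rewrite ab eqxx.
suff -> : (\row_i0 diag_mx t i0 i0) = t by [].
by apply/matrixP => a b; rewrite !mxE ord1 eqxx mulr1n.
Qed.

Lemma in_g_delta (R : realType) N k (c : 'I_N -> 'I_k) (i j : 'I_N) :
  i != j -> c i = c j -> in_g c (delta_mx i j : 'M[R[i]]_N).
Proof.
move=> ij cij; apply/andP; split.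
  apply/forallP => a; apply/forallP => b; apply/implyP => cab.
  rewrite mxE; case: (eqVneq a i) => [ai|//]; case: (eqVneq b j) => [bj|//].
  by move: cab; rewrite ai bj cij eqxx.
apply/forallP => b; apply/eqP; apply: big1 => l _; rewrite !mxE.
by case: (eqVneq l i) => [->|//]; rewrite (negPf ij).
Qed.

Lemma in_g0 (R : realType) N k (c : 'I_N -> 'I_k) : in_g c (0 : 'M[R[i]]_N).
Proof.
apply/andP; split.
  by apply/forallP => a; apply/forallP => b; apply/implyP; rewrite mxE.
by apply/forallP => b; apply/eqP; apply: big1 => l _; rewrite !mxE.
Qed.

Lemma rho0 (R : realType) N k d (c : 'I_N -> 'I_k) (rho : 'M[R[i]]_N -> 'M[R[i]]_d) :
  is_rep c rho -> rho 0 = 0.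
Proof.
move=> [lin _]; have H := lin 1 0 0 (@in_g0 R _ _ c) (@in_g0 R _ _ c).
rewrite !scale1r !addr0 in H.
by apply: (addrI (rho 0)); rewrite addr0 -H.
Qed.

Lemma rhoZ (R : realType) N k d (c : 'I_N -> 'I_k) (rho : 'M[R[i]]_N -> 'M[R[i]]_d) a X :
  is_rep c rho -> in_g c X -> rho (a *: X) = a *: rho X.
Proof.
move=> hr gX; have := hr.1 a X 0 gX (@in_g0 R _ _ c).
by rewrite addr0 (rho0 hr) addr0.
Qed.

Lemma bracket_diag_delta (F : comPzRingType) N (t : 'rV[F]_N) (i j : 'I_N) :
  lie_bracket (diag_mx t) (delta_mx i j) = (t 0 i - t 0 j) *: delta_mx i j.
Proof.
apply/matrixP => a b; rewrite /lie_bracket mul_diag_mx mul_mx_diag !mxE.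
case: (eqVneq a i) => [->|ai]; case: (eqVneq b j) => [->|bj] /=;
  by rewrite ?mulr1 ?mul1r ?mulr0 ?mul0r ?subr0 ?andbF.
Qed.

Lemma bracket_delta (F : comPzRingType) N (i j : 'I_N) : i != j ->
  lie_bracket (delta_mx i j) (delta_mx j i) = diag_mx (delta_mx 0 i - delta_mx 0 j) :> 'M[F]_N.
Proof.
move=> ij; rewrite /lie_bracket !mul_delta_mx; apply/matrixP => a b; rewrite !mxE /=.
case: (eqVneq a b) => [<-|ab].
  by rewrite !andbb mulr1n.
have F1 l : (a == l) && (b == l) = false.
  by apply/negbTE/andP => [[/eqP al /eqP bl]]; move: ab; rewrite al bl eqxx.
by rewrite !F1 mulr0n subrr.
Qed.

Lemma c_tperm N k (c : 'I_N -> 'I_k) (i j : 'I_N) : c i = c j -> forall l, c (tperm i j l) = c l.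
Proof. by move=> cij l; case: tpermP => [->|->|]. Qed.

Lemma blocksum0_perm (T : nmodType) N k (c : 'I_N -> 'I_k) (s : 'S_N) (x : 'rV[T]_N) :
  (forall l, c (s l) = c l) -> blocksum0 c x -> blocksum0 c (col_perm s x).
Proof.
move=> cs /forallP bx; apply/forallP => b; apply/eqP.
transitivity (\sum_(l | c l == b) x 0 l); last exact/eqP.
rewrite [RHS](reindex_inj (@perm_inj _ s)) /=.
by apply: eq_big => l; rewrite ?cs // !mxE.
Qed.

Lemma swap_weight_ge (R : realType) N k d (c : 'I_N -> 'I_k)
  (rho : 'M[R[i]]_N -> 'M[R[i]]_d) (x : 'rV[R]_N) (i j : 'I_N) :
  is_rep c rho -> i != j -> c i = c j -> x 0 j <= x 0 i -> is_weight c rho x ->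
  is_weight c rho (col_perm (tperm i j) x).
Proof.
move=> hr ij cij xji [bx [v [v0 Wv]]].
set al : 'rV[R[i]]_N := delta_mx 0 i - delta_mx 0 j.
set xc := map_mx (real_complex R) x.
have evA t : ev al t = t 0 i - t 0 j by rewrite evB !ev_delta.
have ji : j != i by rewrite eq_sym.
have gE := @in_g_delta R _ _ c _ _ ij cij.
have gF := @in_g_delta R _ _ c _ _ ji (esym cij).
have He t : blocksum0 c t -> rho (diag_mx t) *m rho (delta_mx i j) =
    rho (delta_mx i j) *m rho (diag_mx t) + ev al t *: rho (delta_mx i j).
  move=> bt; have := hr.2 _ _ (in_g_diag bt) gE.
  rewrite bracket_diag_delta (rhoZ _ hr gE) /lie_bracket evA => H.
  by rewrite H addrC subrK.
have Hf t : blocksum0 c t -> rho (diag_mx t) *m rho (delta_mx j i) =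
    rho (delta_mx j i) *m rho (diag_mx t) - ev al t *: rho (delta_mx j i).
  move=> bt; have := hr.2 _ _ (in_g_diag bt) gF.
  rewrite bracket_diag_delta (rhoZ _ hr gF) /lie_bracket evA -opprB scaleNr => H.
  by rewrite -scaleNr scaleNr H addrC subrK.
have Hef : rho (delta_mx i j) *m rho (delta_mx j i) - rho (delta_mx j i) *m rho (delta_mx i j)
    = rho (diag_mx al).
  by have := hr.2 _ _ gE gF; rewrite bracket_delta // => ->.
have bh0 : blocksum0 c al by apply: blocksum0_delta.
have ah0 : ev al al = 2.
  by rewrite evA !mxE !eqxx (negPf ij) (negPf ji) /= subr0 sub0r opprK.
have Wx : Wt (fun t => blocksum0 c t) (fun t => rho (diag_mx t)) xc v.
  move=> t bt; rewrite Wv //; congr (_ *: _); apply: eq_bigr => l _; by rewrite mxE.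
have [m [q [Hmq Hw]]] := sl2_main He Hf Hef bh0 ah0 Wx v0.
have evx : ev xc al = (x 0 i - x 0 j)%:C by rewrite evC evA !mxE rmorphB.
have HR : x 0 i - x 0 j + (2 * m)%:R = q%:R.
  apply: (fmorph_inj (real_complex R)); by rewrite rmorphD /= !rmorph_nat -evx.
have q2m : (2 * m <= q)%N by rewrite -(ler_nat R) -HR lerDr subr_ge0.
have mq : (m <= q)%N by apply: leq_trans q2m; rewrite leq_pmull.
have [w [w0 Ww]] := Hw (q - m)%N (leq_subr _ _).
split; first by apply: blocksum0_perm => //; apply: c_tperm.
exists w; split => // t bt; rewrite Ww //; congr (_ *: _).
have coef : (m%:R - (q - m)%:R : R[i]) = - (x 0 i - x 0 j)%:C.
  have E : ev xc al = q%:R - (2 * m)%:R by rewrite -Hmq addrK.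
  by rewrite -evx E natrB // natrM; ring.
rewrite /ev; apply: eq_bigr => l _; congr (_ * _); rewrite !mxE coef /=.
rewrite complexr0 rmorphB /=.
case: (eqVneq l i) => [->|li]; first by rewrite tpermL (negPf ij) /= subr0; ring.
case: (eqVneq l j) => [->|lj]; first by rewrite tpermR /= sub0r; ring.
by rewrite tpermD 1?eq_sym // subrr mulr0 addr0.
Qed.

Lemma swap_weight (R : realType) N k d (c : 'I_N -> 'I_k)
  (rho : 'M[R[i]]_N -> 'M[R[i]]_d) (x : 'rV[R]_N) (i j : 'I_N) :
  is_rep c rho -> c i = c j -> is_weight c rho x ->
  is_weight c rho (col_perm (tperm i j) x).
Proof.
move=> hr cij wx; case: (eqVneq i j) => [<-|ij].
  by rewrite tperm1 col_perm1.
case: (lerP (x 0 j) (x 0 i)) => [le|/ltW le]; first exact: swap_weight_ge.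
by rewrite tpermC; apply: swap_weight_ge => //; rewrite eq_sym.
Qed.

Lemma perm_map_inv (T : eqType) (s : seq T) (f : T -> T) :
  uniq s -> {in s, forall x, f x \in s} -> involutive f -> perm_eq s (map f s).
Proof.
move=> us fs finv; apply: uniq_perm => //; first by rewrite map_inj_uniq //; apply: inv_inj.
move=> y; apply/idP/idP => [ys|/mapP [x xs ->]]; last exact: fs.
by rewrite -(finv y); apply: map_f; apply: fs.
Qed.

Lemma tperm_invol N (i j : 'I_N) (R : Type) : involutive (fun x : 'rV[R]_N => col_perm (tperm i j) x).
Proof. by move=> x; apply/matrixP => a b; rewrite !mxE tpermK. Qed.

Definition closed_sw (R : eqType) N k (c : 'I_N -> 'I_k) (s : seq 'rV[R]_N) :=
  forall x i j, x \in s -> c i = c j -> col_perm (tperm i j) x \in s.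

Lemma sum_sw (R : eqType) (V : nmodType) N k (c : 'I_N -> 'I_k) (s : seq 'rV[R]_N) i j
  (g : 'rV[R]_N -> V) :
  uniq s -> closed_sw c s -> c i = c j ->
  \sum_(x <- s) g x = \sum_(x <- s) g (col_perm (tperm i j) x).
Proof.
move=> us cs cij; rewrite [LHS](perm_big _ (perm_map_inv us _ (@tperm_invol N i j R))).
  by rewrite big_map.
by move=> x xs; apply: cs.
Qed.

Lemma block_const_zero (R : numDomainType) N k (c : 'I_N -> 'I_k) (phi : 'I_N -> R) l :
  \sum_(l' | c l' == c l) phi l' = 0 -> (forall l', c l' = c l -> phi l' = phi l) ->
  phi l = 0.
Proof.
move=> H0 Hc; move: H0; rewrite (eq_bigr (fun=> phi l)); last by move=> l' /eqP; apply: Hc.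
rewrite sumr_const => /eqP; rewrite mulrn_eq0 => /orP [|/eqP //].
move=> /eqP /card0_eq /(_ l); rewrite unfold_in /=.
have -> : eqn (c l) (c l) by apply/eqnP.
by rewrite inE.
Qed.

Lemma sum_entry (R : pzRingType) N (s : seq 'rV[R]_N) (a : 'rV[R]_N -> R) l :
  (\sum_(x <- s) a x *: x) 0 l = \sum_(x <- s) a x * x 0 l.
Proof. by rewrite summxE; apply: eq_bigr => x _; rewrite mxE. Qed.

Lemma blocksum_seq (R : numDomainType) N k (c : 'I_N -> 'I_k) (s : seq 'rV[R]_N)
  (a : 'rV[R]_N -> R) b :
  (forall x, x \in s -> blocksum0 c x) ->
  \sum_(l | c l == b) \sum_(x <- s) a x * x 0 l = 0.
Proof.
move=> bs; rewrite exchange_big /= big_seq big1 // => x xs.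
by rewrite -mulr_sumr (eqP (forallP (bs x xs) b)) mulr0.
Qed.

Lemma inv_rel (R : numDomainType) N k (c : 'I_N -> 'I_k) (s : seq 'rV[R]_N)
  (a : 'rV[R]_N -> R) :
  uniq s -> closed_sw c s -> (forall x, x \in s -> blocksum0 c x) ->
  (forall x i j, x \in s -> c i = c j -> a (col_perm (tperm i j) x) = a x) ->
  \sum_(x <- s) a x *: x = 0.
Proof.
move=> us cs bs ainv; apply/matrixP => z l; rewrite ord1 [RHS]mxE sum_entry.
apply: (block_const_zero (c := c) (phi := fun l => \sum_(x <- s) a x * x 0 l)).
  exact: blocksum_seq.
move=> l' cl' /=.
rewrite (sum_sw (fun x => a x * x 0 l') us cs cl') !big_seq; apply: eq_bigr => x xs.
by rewrite ainv // mxE tpermL.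
Qed.

Lemma G_zero (R : numDomainType) N k (c : 'I_N -> 'I_k) (s : seq 'rV[R]_N) p q r :
  uniq s -> closed_sw c s -> (forall x, x \in s -> blocksum0 c x) ->
  c q != c p -> c r != c p ->
  \sum_(x <- s) x 0 q * x 0 r * x 0 p = 0.
Proof.
move=> us cs bs cqp crp.
apply: (block_const_zero (c := c) (phi := fun p => \sum_(x <- s) x 0 q * x 0 r * x 0 p)).
  exact: blocksum_seq.
move=> p' cp' /=.
rewrite (sum_sw (fun x => x 0 q * x 0 r * x 0 p') us cs cp'); apply: eq_bigr => x _.
have nq l : c l = c p -> tperm p' p q = q.
  by move=> _; apply: tpermD; apply/eqP => E; move: cqp; rewrite -E ?cp' eqxx.
rewrite !mxE tpermL; congr (_ * _ * _).
  rewrite tpermD //; apply/eqP => E; move: cqp; by rewrite -E ?cp' eqxx.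
rewrite tpermD //; apply/eqP => E; move: crp; by rewrite -E ?cp' eqxx.
Qed.

Lemma T_rel (R : numDomainType) N k (c : 'I_N -> 'I_k) (s : seq 'rV[R]_N) i j :
  uniq s -> closed_sw c s -> (forall x, x \in s -> blocksum0 c x) ->
  c i != c j -> \sum_(x <- s) (x 0 i * x 0 j) *: x = 0.
Proof.
move=> us cs bs cij; apply/matrixP => z l; rewrite ord1 [RHS]mxE sum_entry.
case: (eqVneq (c l) (c i)) => cli.
  transitivity (\sum_(x <- s) x 0 i * x 0 l * x 0 j).
    by apply: eq_bigr => x _; ring.
  by apply: (G_zero (c := c)) => //; rewrite cli.
transitivity (\sum_(x <- s) x 0 j * x 0 l * x 0 i).
  by apply: eq_bigr => x _; ring.
by apply: (G_zero (c := c)) => //; rewrite eq_sym.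
Qed.

Definition Qb (R : pzRingType) N k (c : 'I_N -> 'I_k) b (x : 'rV[R]_N) :=
  \sum_(l | c l == b) x 0 l ^+ 2.

Lemma Qb_sw (R : pzRingType) N k (c : 'I_N -> 'I_k) b (x : 'rV[R]_N) i j :
  c i = c j -> Qb c b (col_perm (tperm i j) x) = Qb c b x.
Proof.
move=> cij; rewrite /Qb [RHS](reindex_inj (@perm_inj _ (tperm i j))) /=.
apply: eq_big => l; last by rewrite mxE.
by case: tpermP => [->|->|]; rewrite ?cij.
Qed.

Definition Smx (F : Type) N (s : seq 'rV[F]_N) (x0 : 'rV[F]_N) : 'M[F]_(size s, N) :=
  \matrix_(p < size s) nth x0 s p.

Lemma comb_mx (F : pzRingType) N (s : seq 'rV[F]_N) (a : 'I_(size s) -> F) :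
  \sum_(p < size s) a p *: s`_p = (\row_p a p) *m Smx s 0.
Proof. by rewrite mulmx_sum_row; apply: eq_bigr => p _; rewrite rowK mxE. Qed.

Lemma rank_lb (R : realType) N k (c : 'I_N -> 'I_k) (s : seq 'rV[R]_N) :
  spans_E c s -> (N - k <= \rank (Smx s 0))%N.
Proof.
move=> sp; set M : 'M[R]_(N, k) := \matrix_(l, b) (c l == b)%:R.
have sub : (kermx M <= Smx s 0)%MS.
  apply/row_subP => l; set v := row l (kermx M).
  have vM : v *m M = 0 by rewrite -row_mul mulmx_ker row0.
  have bv : blocksum0 c v.
    apply/forallP => b; apply/eqP; have := congr1 (fun A : 'M[R]_(1, k) => A 0 b) vM.
    rewrite !mxE => H; rewrite -[RHS]H big_mkcond /=.
    by apply: eq_bigr => l' _; rewrite !mxE; case: (c l' == b); rewrite ?mulr1 ?mulr0.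
  have [coef ->] := sp v bv; rewrite comb_mx; exact: submxMl.
have := mxrankS sub; rewrite mxrank_ker.
have := rank_leq_col M; lia.
Qed.

Lemma rank_rel (F : fieldType) n m p (S : 'M[F]_(n, m)) (A : 'M[F]_(p, n)) :
  A *m S = 0 -> (\rank A + \rank S <= n)%N.
Proof.
move=> /sub_kermxP /mxrankS; rewrite mxrank_ker.
have := rank_leq_row S; lia.
Qed.

Lemma rank_ones (F : fieldType) n : (0 < n)%N -> \rank (const_mx (1%R : F) : 'M[F]_(1, n)) = 1%N.
Proof.
move=> n0; apply/eqP; rewrite eqn_leq rank_leq_row lt0n mxrank_eq0.
apply/negP => /eqP /matrixP /(_ 0 (Ordinal n0)); rewrite !mxE => /eqP.
by rewrite oner_eq0.
Qed.

Lemma rank_two (F : fieldType) n (a : 'rV[F]_n) (p q : 'I_n) : a 0 p != a 0 q ->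
  (2 <= \rank (col_mx (const_mx (1%R : F) : 'rV[F]_n) a))%N.
Proof.
move=> apq.
have pq : p != q by apply: contraNneq apq => ->.
pose sel := fun z : 'I_2 => if z == 0 then p else q.
pose P : 'M[F]_(n, 2) := \matrix_(l, z) (l == sel z)%:R.
pose d := a 0 q - a 0 p.
have d0 : d != 0 by rewrite subr_eq0 eq_sym.
pose B : 'M[F]_2 := \matrix_(z, w) (d^-1 * (if z == 0 then (if w == 0 then a 0 q else -1)
                                           else (if w == 0 then - a 0 p else 1))).
have AP : col_mx (const_mx (1%R : F) : 'rV[F]_n) a *m P =
    \matrix_(z, w) (if z == 0 then 1 else a 0 (sel w)).
  apply/matrixP => z w; rewrite !mxE (bigD1 (sel w)) //= big1 => [|l /negbTE ls].
    rewrite !mxE eqxx mulr1 addr0.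
    case: splitP => [z1 hz|z2 hz]; rewrite ?mxE ord1 in hz *.
      by have /eqP -> : z == 0 by apply/eqP/val_inj.
    by have /negPf -> : z != 0 by apply/eqP => z0; move: hz; rewrite z0.
  by rewrite !mxE ls mulr0.
have : (col_mx (const_mx (1%R : F) : 'rV[F]_n) a *m P) *m B = 1%:M.
  rewrite AP; apply/matrixP => z w; rewrite !mxE !big_ord_recl big_ord0 !mxE /sel /=.
  case: z => [[|[|//]] ?]; case: w => [[|[|//]] ?] /=.
  - by rewrite /d; field; rewrite subr_eq0 eq_sym.
  - by ring.
  - by ring.
  - by rewrite /d; field; rewrite subr_eq0 eq_sym.
move=> /mulmx1_unit [/mxrank_unit H _].
by rewrite -[X in (X <= _)%N]H mxrankM_maxl.
Qed.

Lemma seq_ord (F : pzRingType) N (s : seq 'rV[F]_N) (a : 'rV[F]_N -> F) :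
  \sum_(x <- s) a x *: x = \sum_(p < size s) a s`_p *: s`_p.
Proof. by rewrite (big_nth 0) big_mkord. Qed.

Lemma ones_mx (F : pzRingType) N (s : seq 'rV[F]_N) :
  \sum_(x <- s) 1 *: x = 0 -> (const_mx 1 : 'rV[F]_(size s)) *m Smx s 0 = 0.
Proof.
move=> H; rewrite seq_ord comb_mx in H; rewrite -[RHS]H; congr (_ *m _).
by apply/matrixP => z p; rewrite !mxE.
Qed.

Lemma rel_const (R : realType) N k (c : 'I_N -> 'I_k) (s : seq 'rV[R]_N) :
  spans_E c s -> size s = (N - k).+1 -> \sum_(x <- s) 1 *: x = 0 ->
  forall a : 'rV[R]_N -> R, \sum_(x <- s) a x *: x = 0 ->
  forall x y, x \in s -> y \in s -> a x = a y.
Proof.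
move=> sp sz H1 a H x y xs ys; apply/eqP; apply: contraT => axy.
pose av : 'rV[R]_(size s) := \row_p a s`_p.
have Hm : col_mx (const_mx (1%R : R) : 'rV[R]_(size s)) av *m Smx s 0 = 0.
  rewrite mul_col_mx ones_mx // -comb_mx -seq_ord H; exact: col_mx0.
have ix : (index x s < size s)%N by rewrite index_mem.
have iy : (index y s < size s)%N by rewrite index_mem.
have := rank_two (p := Ordinal ix) (q := Ordinal iy) (a := av).
rewrite !mxE /= !nth_index // => /(_ axy).
have := rank_rel Hm; have := rank_lb sp => h1 h2 h3.
pose r1 := \rank (col_mx (const_mx (1%R : R) : 'rV[R]_(size s)) av).
pose r2 := \rank (Smx s 0).
have h2' : (r1 + r2 <= size s)%N := h2.
have h3' : (2 <= r1)%N := h3.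
have h1' : (N - k <= r2)%N := h1.
move: h1' h2' h3'; rewrite sz; lia.
Qed.

Unset Implicit Arguments.
Local Open Scope ring_scope.
Theorem lemma5p6 (R : realType) (N k d : nat) (c : 'I_N -> 'I_k)
  (rho : 'M[R[i]]_N -> 'M[R[i]]_d) (B : 'M[R]_N) (s : seq 'rV[R]_N) :
  (0 < k)%N -> valid_blocks c ->
  is_rep c rho -> faithful c rho ->
  inner_product_on_E c B -> weyl_invariant c B ->
  uniq s -> (forall x, x \in s <-> max_weight c rho B x) ->
  spans_E c s ->
  ((N - k).+1 <= size s)%N /\ (size s = (N - k).+1 -> k = 1%N).
Proof.
move=> k0 vb hr hf ip wi us Hs sp.
have bs x : x \in s -> blocksum0 c x by move=> /Hs [[]].
have cs : closed_sw c s.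
  move=> x i j /Hs [wx mx] cij; apply/Hs; split; first exact: swap_weight.
  move=> y wy; rewrite wi //; first exact: mx.
  - exact: c_tperm.
  - exact: wx.1.
  - exact: wx.1.
have nzb b : exists x, x \in s /\ exists l, c l = b /\ x 0 l != 0.
  have /card_gt1P [i0 [i1 [Hi0 Hi1 ne]]] := vb b.
  rewrite !inE in Hi0 Hi1.
  have bz := @blocksum0_delta R _ _ c i0 i1 (etrans (eqP Hi0) (esym (eqP Hi1))).
  have [coef Hz] := sp _ bz.
  case: (boolP [exists p : 'I_(size s), s`_p 0 i0 != 0]) => [/existsP [p Hp]|/existsPn Hn].
    exists s`_p; split; first by apply: mem_nth.
    by exists i0; split => //; apply/eqP.
  have := congr1 (fun z : 'rV[R]_N => z 0 i0) Hz.
  rewrite /= summxE !mxE eqxx (negPf ne) /= big1 ?subr0 => [/eqP|p _].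
    by rewrite eqxx oner_eq0.
  by rewrite mxE (eqP (negPn (Hn p))) mulr0.
have H1 : \sum_(x <- s) 1 *: x = 0 by apply: (inv_rel (c := c)).
have [x0 [x0s _]] := nzb (Ordinal k0).
have sz0 : (0 < size s)%N.
  by rewrite lt0n size_eq0; apply/eqP => s0; move: x0s; rewrite s0.
have part1 : ((N - k).+1 <= size s)%N.
  pose r2 := \rank (Smx s 0).
  have h1 : (N - k <= r2)%N := rank_lb sp.
  have h2 : (1 + r2 <= size s)%N by have := rank_rel (ones_mx H1); rewrite rank_ones // => h; exact: h.
  lia.
split => // sz.
apply/eqP; apply: contraT => k1.
have k2 : (1 < k)%N by lia.
pose b0 := Ordinal k0; pose b1 := Ordinal k2.
have b01 : b0 != b1 by [].
have RC := rel_const sp sz H1.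
have Qc b x y : x \in s -> y \in s -> Qb c b x = Qb c b y.
  apply: RC; apply: (inv_rel (c := c)) => // z i j _ cij; exact: Qb_sw.
have Qnz b x : x \in s -> exists l, c l = b /\ x 0 l != 0.
  move=> xs; have [y [ys [l [cl yl]]]] := nzb b.
  have Qy : Qb c b y != 0.
    apply/negP => /eqP Q0.
    have := psumr_eq0P (fun l _ => sqr_ge0 (y 0 l)) Q0 (i := l).
    by rewrite cl eqxx => /(_ isT) /eqP; rewrite sqrf_eq0 (negPf yl).
  rewrite (Qc b y x ys xs) in Qy.
  case: (boolP [exists l, (c l == b) && (x 0 l != 0)]) => [/existsP [l' /andP [/eqP ? ?]]|/existsPn Hn].
    by exists l'.
  move: Qy; rewrite /Qb big1 ?eqxx // => l' cl'.
  by move: (Hn l'); rewrite cl' /= negbK => /eqP ->; rewrite expr0n.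
have [i0 [ci0 xi0]] := Qnz b0 x0 x0s.
have [j [cj xj]] := Qnz b1 x0 x0s.
have const i' : c i' = c i0 -> x0 0 i' = x0 0 i0.
  move=> ci'.
  have cij : c i' != c j by rewrite ci' ci0 cj.
  have T := T_rel us cs bs cij.
  have := RC (fun z => z 0 i' * z 0 j) T x0 (col_perm (tperm i' i0) x0) x0s (cs _ _ _ x0s ci').
  rewrite !mxE tpermL tpermD.
  - by move/(mulIf xj).
  - by apply: contraNneq cij => ->.
  - by apply: contraNneq cij => <-; rewrite ci'.
have := @block_const_zero R N k c (fun l => x0 0 l) i0 (eqP (forallP (bs _ x0s) (c i0))) const.
by move=> /= h; rewrite h eqxx in xi0.
Qed.
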